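(* Let $P$ be a finite poset (hence a DCPO) and $\theta$ an equivalence relation on $P$. Then $\theta$ is a natural DCPO congruence if and only if $\theta$ is a compatible congruence.
   Context: A subset $D$ of a poset is directed if every finite subset of $D$ has an upper bound in $D$ (in particular $D$ is nonempty). A poset is a DCPO (directed complete partial order) if every directed subset has a join. A map $\phi\colon P\to Q$ between DCPOs is a DCPO map if for every directed $D\subseteq P$, $\phi(D)$ is directed and $\phi(\bigvee D)=\bigvee\phi(D)$. For an equivalence relation $\theta$ with classes $[p]$, the quotient relation is $[p]\leqslant_\theta[q]$ iff there exist $p'\in[p]$, $q'\in[q]$ with $p'\leqslant q'$; $\theta$ is a natural DCPO congruence if the transitive closure of $\leqslant_\theta$ is a partial order on $P/\theta$ making it a DCPO and the canonical map $P\to P/\theta$ is a DCPO map. A $\theta$-circle is a sequence $(p_0,\dots,p_n)$ with $p_0=p_n$ and for each $i$ either $p_{i-1}\,\theta\,p_i$ or $p_{i-1}<p_i$; $\theta$ is a compatible congruence if every $\theta$-circle lies within one equivalence class. *)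

(* Defs.v *)
From mathcomp Require Import all_boot all_order.
From Stdlib Require Import Relations.
From Stdlib Require List.
Set Implicit Arguments. Unset Strict Implicit. Unset Printing Implicit Defensive.
Import Order.TTheory.
Local Open Scope order_scope.

Section Generic.
Variables (T : Type) (le : T -> T -> Prop).

Definition is_partial_order : Prop :=
  (forall x, le x x) /\
  (forall x y, le x y -> le y x -> x = y) /\
  (forall x y z, le x y -> le y z -> le x z).

Definition directed (D : T -> Prop) : Prop :=
  forall s : seq T, (forall x, List.In x s -> D x) ->
    exists2 z, D z & forall x, List.In x s -> le x z.

Definition is_join (D : T -> Prop) (j : T) : Prop :=
  (forall x, D x -> le x j) /\
  (forall u, (forall x, D x -> le x u) -> le j u).

Definition is_dcpo : Prop :=
  is_partial_order /\ forall D, directed D -> exists j, is_join D j.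
End Generic.

Definition img (A B : Type) (f : A -> B) (D : A -> Prop) : B -> Prop :=
  fun b => exists2 a, D a & f a = b.

Definition dcpo_map (A B : Type) (leA : A -> A -> Prop) (leB : B -> B -> Prop)
  (f : A -> B) : Prop :=
  forall D : A -> Prop, directed leA D ->
    directed leB (img f D) /\ forall j, is_join leA D j -> is_join leB (img f D) (f j).

Section Quotient.
Variables (d : Order.disp_t) (P : porderType d) (theta : P -> P -> Prop).

Definition eqclass (x : P) : P -> Prop := theta x.

Definition quot : Type := {A : P -> Prop | exists x : P, A = eqclass x}.

Definition quot_map (x : P) : quot := exist _ (eqclass x) (ex_intro _ x erefl).

Definition quot_le (A B : quot) : Prop :=
  exists p q, proj1_sig A p /\ proj1_sig B q /\ p <= q.

Definition quot_order : quot -> quot -> Prop := clos_trans quot quot_le.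

Definition poset_le (x y : P) : Prop := x <= y.

Definition natural_dcpo_congruence : Prop :=
  is_dcpo quot_order /\ dcpo_map poset_le quot_order quot_map.

(* theta-circles: (x0, s) stands for the sequence x0 :: s, whose consecutive
   entries are theta-related or strictly increasing, and which ends at x0 *)
Definition circ_step (x y : P) : Prop := theta x y \/ x < y.

Fixpoint circ_chain (x : P) (s : seq P) : Prop :=
  match s with
  | [::] => True
  | y :: s' => circ_step x y /\ circ_chain y s'
  end.

Definition theta_circle (x0 : P) (s : seq P) : Prop :=
  circ_chain x0 s /\ last x0 s = x0.

Definition compatible_congruence : Prop :=
  forall x0 s, theta_circle x0 s ->
    forall y z, List.In y (x0 :: s) -> List.In z (x0 :: s) -> theta y z.
End Quotient.

(* Main.v *)
Require Import Defs.
From mathcomp Require Import all_boot all_order.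
From Stdlib Require Import Relations.
From Stdlib Require Import Classical ProofIrrelevance FunctionalExtensionality PropExtensionality.
Set Implicit Arguments. Unset Strict Implicit. Unset Printing Implicit Defensive.
Import Order.TTheory.
Local Open Scope order_scope.

Lemma In_of_mem (T : eqType) (x : T) (s : seq T) : x \in s -> List.In x s.
Proof.
elim: s => [|y s IH] //=; rewrite in_cons => /orP [/eqP ->|H]; [by left|by right; apply: IH].
Qed.

Lemma filter_ex (T : Type) (D : T -> Prop) (L : seq T) :
  exists s, (forall x, List.In x s -> D x) /\ (forall x, List.In x L -> D x -> List.In x s).
Proof.
elim: L => [|y L [s [H1 H2]]]; first by exists [::].
case: (classic (D y)) => Hy.
- exists (y :: s); split.
  + by move=> x [<-|Hx]; [|apply: H1].
  + by move=> x [<-|Hx] Dx; [left|right; apply: H2].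
- exists s; split => // x [<-|Hx] Dx; [by []|by apply: H2].
Qed.

Lemma fin_dir_max (T : Type) (le : T -> T -> Prop) (D : T -> Prop) (L : seq T) :
  (forall t, D t -> List.In t L) -> directed le D ->
  exists2 z, D z & forall x, D x -> le x z.
Proof.
move=> HL Hd; have [s [H1 H2]] := filter_ex D L.
have [z Dz Hz] := Hd s H1; exists z => // x Dx; apply: Hz; apply: H2 => //; exact: HL.
Qed.

Lemma preimg (A B : Type) (f : A -> B) (D : A -> Prop) (s : seq B) :
  (forall x, List.In x s -> img f D x) ->
  exists t, (forall a, List.In a t -> D a) /\ forall x, List.In x s -> exists a, List.In a t /\ f a = x.
Proof.
elim: s => [|y s IH] H; first by exists [::].
have [t [H1 H2]] := IH (fun x Hx => H x (or_intror Hx)).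
have [a Da Ha] := H y (or_introl erefl).
exists (a :: t); split.
- by move=> b [<-|Hb]; [|apply: H1].
- move=> x [<-|Hx]; first by exists a; split; [left|].
  by have [b [Hb Hfb]] := H2 x Hx; exists b; split; [right|].
Qed.

Section Main.
Variables (d : Order.disp_t) (P : finPOrderType d) (theta : P -> P -> Prop).
Hypothesis Htheta : equivalence P theta.

Let refl x : theta x x := equiv_refl _ _ Htheta x.
Let sym x y : theta x y -> theta y x := equiv_sym _ _ Htheta x y.
Let trans x y z : theta x y -> theta y z -> theta x z := equiv_trans _ _ Htheta x y z.

Lemma quot_ext (A B : quot theta) : proj1_sig A = proj1_sig B -> A = B.
Proof. case: A => A pA; case: B => B pB /= E; subst B; f_equal; apply: proof_irrelevance. Qed.

Lemma quot_map_eq x y : theta x y -> quot_map theta x = quot_map theta y.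
Proof.
move=> H; apply: quot_ext => /=; rewrite /eqclass.
apply: functional_extensionality => z; apply: propositional_extensionality; split.
- by move=> Hz; apply: trans (sym H) Hz.
- by move=> Hz; apply: trans H Hz.
Qed.

Lemma quot_surj (A : quot theta) : exists x, A = quot_map theta x.
Proof. case: (A) => A' [x E]; exists x; apply: quot_ext => /=; exact: E. Qed.

Lemma quot_cover (D : quot theta -> Prop) :
  forall t, D t -> List.In t (map (quot_map theta) (enum P)).
Proof.
move=> t _; have [x ->] := quot_surj t.
apply: List.in_map; apply: In_of_mem; exact: mem_enum.
Qed.

Lemma quot_le_refl (A : quot theta) : quot_le A A.
Proof. have [x ->] := quot_surj A; exists x, x; split; [exact: refl|split; [exact: refl|exact: lexx]]. Qed.

Lemma quot_order_refl (A : quot theta) : quot_order A A.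
Proof. apply: t_step; exact: quot_le_refl. Qed.

Lemma mono x y : x <= y -> quot_order (quot_map theta x) (quot_map theta y).
Proof. move=> H; apply: t_step; exists x, y; split; [exact: refl|split; [exact: refl|exact: H]]. Qed.

Lemma dmap : dcpo_map (@poset_le _ P) (@quot_order _ P theta) (quot_map theta).
Proof.
move=> D Hd; split.
- move=> s Hs; have [t [H1 H2]] := preimg Hs.
  have [z Dz Hz] := Hd t H1.
  exists (quot_map theta z); first by exists z.
  move=> x Hx; have [a [Ha <-]] := H2 x Hx; apply: mono; exact: Hz.
- move=> j [Hj1 Hj2].
  have [m Dm Hm] := fin_dir_max (L := enum P) (fun t _ => In_of_mem (mem_enum P t)) Hd.
  have E : j = m by apply/le_anti/andP; split; [apply: Hj2; exact: Hm|apply: Hj1].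
  subst m; split.
  + by move=> y [a Da <-]; apply: mono; apply: Hj1.
  + by move=> u Hu; apply: Hu; exists j.
Qed.

Lemma step_of_le (p q : P) : p <= q -> circ_step theta p q.
Proof. rewrite le_eqVlt => /orP [/eqP ->|H]; [left; exact: refl|by right]. Qed.

Lemma circ_cat x s1 s2 : circ_chain theta x s1 -> circ_chain theta (last x s1) s2 ->
  circ_chain theta x (s1 ++ s2).
Proof. elim: s1 x => [|y s1 IH] x //= [H1 H2] H3; split => //; exact: IH. Qed.

Lemma chain_of_order (A B : quot theta) : quot_order A B -> forall a b, proj1_sig A a -> proj1_sig B b ->
  exists s, circ_chain theta a s /\ last a s = b.
Proof.
elim=> {A B} [A B [p [q [Ap [Bq Hpq]]]]|A B C _ IH1 _ IH2] a b Aa Bb.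
- exists [:: p; q; b]; split => //=.
  have [x EA] := quot_surj A; have [y EB] := quot_surj B; subst A B; move: Aa Ap Bq Bb => /= Aa Ap Bq Bb.
  split; first by left; apply: trans (sym Aa) Ap.
  split; first exact: step_of_le.
  split => //; left; apply: trans (sym Bq) Bb.
- have [y EB] := quot_surj B; subst B.
  have [s1 [H1 L1]] := IH1 a y Aa (refl y).
  have [s2 [H2 L2]] := IH2 y b (refl y) Bb.
  exists (s1 ++ s2); split; last by rewrite last_cat L1.
  by apply: circ_cat => //; rewrite L1.
Qed.

Lemma chain_order x s : circ_chain theta x s ->
  forall y, List.In y (x :: s) ->
    quot_order (quot_map theta x) (quot_map theta y) /\
    quot_order (quot_map theta y) (quot_map theta (last x s)).
Proof.
elim: s x => [|z s IH] x /=.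
- by move=> _ y [<-|[]]; split; apply: quot_order_refl.
- move=> [Hs Hc] y Hy.
  have Hxz : quot_order (quot_map theta x) (quot_map theta z).
    case: Hs => [H|H]; first by rewrite (quot_map_eq H); apply: quot_order_refl.
    by apply: mono; apply: ltW.
  case: Hy => [<-|Hy].
  + split; first exact: quot_order_refl.
    apply: t_trans Hxz _; have [] := IH z Hc z (or_introl erefl) => //.
  + have [H1 H2] := IH z Hc y Hy; split => //; exact: t_trans Hxz H1.
Qed.

End Main.

Theorem mainTheorem13 (d : Order.disp_t) (P : finPOrderType d)
  (theta : P -> P -> Prop) (Htheta : equivalence P theta) :
  natural_dcpo_congruence theta <-> compatible_congruence theta.
Proof.
have refl x : theta x x := equiv_refl _ _ Htheta x.
split.
- move=> [[[_ [Hanti _]] _] _] x0 s [Hc Hl] y z Hy Hz.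
  have [Hy1 Hy2] := chain_order Htheta Hc Hy.
  have [Hz1 Hz2] := chain_order Htheta Hc Hz.
  rewrite Hl in Hy2 Hz2.
  have E : quot_map theta y = quot_map theta z.
    apply: Hanti; [exact: t_trans Hy2 Hz1|exact: t_trans Hz2 Hy1].
  have : proj1_sig (quot_map theta y) z by rewrite E; exact: refl.
  by [].
- move=> Hc; split; last exact: dmap.
  split.
  + split; first exact: quot_order_refl.
    split; last by move=> x y z; apply: t_trans.
    move=> A B HAB HBA.
    have [x EA] := quot_surj A; have [y EB] := quot_surj B; subst A B.
    have [s1 [H1 L1]] := chain_of_order Htheta HAB (refl x) (refl y).
    have [s2 [H2 L2]] := chain_of_order Htheta HBA (refl y) (refl x).
    apply: quot_map_eq => //.
    case: s1 H1 L1 => [|w s1] H1 /= L1; first by rewrite -L1.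
    have Hcirc : theta_circle theta x ((w :: s1) ++ s2).
      split; first by apply: circ_cat => //; rewrite /= L1.
      by rewrite last_cat /= L1.
    apply: (Hc _ _ Hcirc); first by left.
    right; rewrite -L1; clear; elim: s1 w => [|v s1 IH] w /=; [by left|right; exact: IH].
  + move=> D Hd.
    have [m Dm Hm] := fin_dir_max (@quot_cover _ _ theta D) Hd.
    exists m; split => //; by move=> u Hu; apply: Hu.
Qed.
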